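(* Let $\mathcal{H}$ be a real Hilbert space, $f:\mathcal{H}\to\mathbb{R}$ $\mu$-strongly convex and $L$-smooth with $0<\mu<L<\infty$, $g:\mathcal{H}\to\mathbb{R}\cup\{+\infty\}$ convex, proper and lower semicontinuous, $q=\mu/L$, and $x^\star$ the unique minimizer of $f+g$. Let the Prox-TMM iterates and the quantities $\mathcal{V}_k^\infty$ be as defined in the context. Then for every $k\in\mathbb{N}$ (i.e. $k\ge1$), $$\mathcal{V}_{k+1}^\infty\le(1-\sqrt q)^2\,\mathcal{V}_k^\infty.$$
   Context: $\operatorname{Prox}^{\gamma}_g(x)=\operatorname{argmin}_z\big(g(z)+\frac{1}{2\gamma}\|x-z\|^2\big)$. Prox-TMM from $x^0\in\mathcal{H}$: $z^0=x^0$, and for $k\ge0$: $y^k=\frac{2\sqrt q}{1+\sqrt q}z^k+\frac{1-\sqrt q}{1+\sqrt q}x^k$, $\bar z^{k+1}=(1-\sqrt q)z^k+\sqrt q\,y^k-\frac{1}{\sqrt qL}\nabla f(y^k)$, $z^{k+1}=\operatorname{Prox}^{1/(\sqrt qL)}_g(\bar z^{k+1})$, $x^{k+1}=y^k-\frac1L\nabla f(y^k)-\sqrt q(\bar z^{k+1}-z^{k+1})$. Define $\mathcal{I}_f(x,y)=f(x)-f(y)-\langle\nabla f(y),x-y\rangle-\frac{\mu}{2}\|x-y\|^2-\frac{1}{2(L-\mu)}\|\nabla f(x)-\nabla f(y)-\mu(x-y)\|^2$ and $\mathcal{I}_g(x,y,s)=g(x)-g(y)-\langle s,x-y\rangle$.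 For $k\ge1$ let $s_g^k=\sqrt qL(\bar z^k-z^k)$ (so $s_g^k\in\partial g(z^k)$), let $s_g^\star=-\nabla f(x^\star)$, and $$\mathcal{V}_k^\infty=(1-q)\mathcal{I}_f(y^{k-1},x^\star)+q\,\mathcal{I}_g(x^\star,z^k,s_g^k)+\sqrt q(\sqrt q-1)\mathcal{I}_g(z^k,x^\star,s_g^\star)+\frac1{2L}\|s_g^k-s_g^\star\|^2+\mu\|z^k-x^\star\|^2.$$ *)

(* Defs.v *)
From HB Require Import structures.
From mathcomp Require Import all_boot all_order all_algebra.
From mathcomp Require Import all_classical all_reals all_analysis.
Set Implicit Arguments. Unset Strict Implicit. Unset Printing Implicit Defensive.
Import Order.TTheory GRing.Theory Num.Theory.
Import numFieldNormedType.Exports.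
Local Open Scope ring_scope.

Section Defs.
Context {R : realType} {V : normedModType R}.

(* ip is an inner product on V inducing the norm of V (so V, when complete,
   is a real Hilbert space). *)
Definition inner_product_of (ip : V -> V -> R) : Prop :=
  [/\ forall x y, ip x y = ip y x,
      forall (a : R) x y z, ip (a *: x + y) z = a * ip x z + ip y z
    & forall x, ip x x = `|x| ^+ 2].

Definition is_gradient (ip : V -> V -> R) (f : V -> R) (gradf : V -> V) : Prop :=
  forall x, differentiable f x /\ forall h, 'd f x h = ip (gradf x) h.

Definition strongly_convex (mu : R) (f : V -> R) : Prop :=
  forall x y (t : R), 0 <= t <= 1 ->
    f (t *: x + (1 - t) *: y) <=
      t * f x + (1 - t) * f y - mu / 2 * t * (1 - t) * `|x - y| ^+ 2.

Definition L_smooth (L : R) (gradf : V -> V) : Prop :=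
  forall x y, `|gradf x - gradf y| <= L * `|x - y|.

Definition econvex (g : V -> \bar R) : Prop :=
  forall x y (t : R), 0 < t < 1 ->
    (g (t *: x + (1 - t) *: y)%R <= t%:E * g x + (1 - t)%:E * g y)%E.

Definition eproper (g : V -> \bar R) : Prop :=
  (forall x, g x != -oo%E) /\ exists x, g x != +oo%E.

Definition is_prox (g : V -> \bar R) (gamma : R) (x p : V) : Prop :=
  forall w, (g p + (`|x - p| ^+ 2 / (2 * gamma))%:E <=
             g w + (`|x - w| ^+ 2 / (2 * gamma))%:E)%E.

Definition I_f (ip : V -> V -> R) (mu L : R) (f : V -> R) (gradf : V -> V)
    (x y : V) : R :=
  f x - f y - ip (gradf y) (x - y) - mu / 2 * `|x - y| ^+ 2
  - 1 / (2 * (L - mu)) * `|gradf x - gradf y - mu *: (x - y)| ^+ 2.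

(* I_g(x,y,s), evaluated at points where g is finite (real value via fine) *)
Definition I_g (ip : V -> V -> R) (g : V -> \bar R) (x y s : V) : R :=
  fine (g x) - fine (g y) - ip s (x - y).

(* V_k^infty for k >= 1, with q = mu/L, s_g^k = sqrt q L (zbar^k - z^k),
   s_g^star = - grad f (xstar) *)
Definition Vinf (ip : V -> V -> R) (mu L : R) (f : V -> R) (gradf : V -> V)
    (g : V -> \bar R) (xstar : V) (y z zbar : nat -> V) (k : nat) : R :=
  let q := mu / L in
  let sk := (Num.sqrt q * L) *: (zbar k - z k) in
  let sstar := - gradf xstar in
  (1 - q) * I_f ip mu L f gradf (y k.-1) xstar
  + q * I_g ip g xstar (z k) sk
  + Num.sqrt q * (Num.sqrt q - 1) * I_g ip g (z k) xstar sstar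
  + 1 / (2 * L) * `|sk - sstar| ^+ 2
  + mu * `|z k - xstar| ^+ 2.

End Defs.

(* Main.v *)
Require Import Defs.
From HB Require Import structures.
From mathcomp Require Import all_boot all_order all_algebra.
From mathcomp Require Import all_classical all_reals all_analysis.
From mathcomp Require Import ring lra.
Import Order.TTheory GRing.Theory Num.Theory.
Import numFieldNormedType.Exports.
Local Open Scope ring_scope.

Lemma lc2 {R : realFieldType} (A B G : R) : G = A + B -> 0 <= A -> 0 <= B -> 0 <= G.
Proof. by move=> -> ha hb; apply: addr_ge0. Qed.

Lemma fin_le1 {R : realType} (a : \bar R) (r s : R) : (r%:E + a <= s%:E)%E -> a != +oo%E.
Proof. by case: a. Qed.
Lemma fin_le2 {R : realType} (a : \bar R) (r s : R) : (a + r%:E <= s%:E)%E -> a != +oo%E.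
Proof. by case: a. Qed.
Lemma efin_of {R : realType} {e : \bar R} : e != -oo%E -> e != +oo%E -> e = (fine e)%:E.
Proof. by move=> h1 h2; rewrite fineK //; apply/fin_numP. Qed.

Lemma lc7 {R : realFieldType} (l1 l2 l3 l4 l5 l6 l7 A1 A2 A3 A4 A5 A6 A7 G : R) :
  0 <= l1 -> 0 <= l2 -> 0 <= l3 -> 0 <= l4 -> 0 <= l5 -> 0 <= l6 -> 0 <= l7 ->
  0 <= A1 -> 0 <= A2 -> 0 <= A3 -> 0 <= A4 -> 0 <= A5 -> 0 <= A6 -> 0 <= A7 ->
  G = l1 * A1 + l2 * A2 + l3 * A3 + l4 * A4 + l5 * A5 + l6 * A6 + l7 * A7 -> 0 <= G.
Proof.
move=> *; subst G.
by rewrite !addr_ge0 // mulr_ge0.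
Qed.

Section IP.
Context {R : realType} {V : normedModType R} {ip : V -> V -> R}.
Hypothesis Hip : inner_product_of ip.

Lemma ipC x y : ip x y = ip y x. Proof. by case: Hip => ->. Qed.
Lemma ipDl x y z : ip (x + y) z = ip x z + ip y z.
Proof. by case: Hip => _ H _; have := H 1 x y z; rewrite scale1r mul1r. Qed.
Lemma ipZl a x z : ip (a *: x) z = a * ip x z.
Proof.
case: Hip => _ H _.
have h0 : ip 0 z = 0 by have := H 1 0 0 z; rewrite scaler0 addr0 mul1r; lra.
by have := H a x 0 z; rewrite addr0 h0 addr0.
Qed.
Lemma ipNl x z : ip (- x) z = - ip x z.
Proof. by rewrite -scaleN1r ipZl mulN1r. Qed.
Lemma ipDr x y z : ip z (x + y) = ip z x + ip z y.
Proof. by rewrite ipC ipDl !(ipC z). Qed.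
Lemma ipZr a x z : ip z (a *: x) = a * ip z x.
Proof. by rewrite ipC ipZl ipC. Qed.
Lemma ipNr x z : ip z (- x) = - ip z x.
Proof. by rewrite ipC ipNl ipC. Qed.
Lemma ipn x : `|x| ^+ 2 = ip x x.
Proof. by case: Hip => _ _ ->. Qed.
Lemma ip_ge0 x : 0 <= ip x x.
Proof. by rewrite -ipn sqr_ge0. Qed.

Lemma young u v : 2 * ip u v <= ip u u + ip v v.
Proof.
have := ip_ge0 (u - v).
rewrite !ipDl !ipDr !ipNl !ipNr (ipC v u); lra.
Qed.

Lemma youngL (L : R) u v : 0 < L -> 2 * ip u v <= ip u u / L + L * ip v v.
Proof.
move=> L0; have := young u (L *: v); rewrite !ipZr ipZl => H.
rewrite -(ler_pM2l L0).
have -> : L * (ip u u / L + L * ip v v) = ip u u + L * (L * ip v v).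
  by field; rewrite gt_eqF.
lra.
Qed.

Definition sip u v := (ip u v + ip v u) / 2.
Lemma ip_sip u v : ip u v = sip u v.
Proof. by rewrite /sip (ipC v u); field. Qed.
Lemma sipDl x y z : sip (x + y) z = sip x z + sip y z.
Proof. by rewrite /sip ipDl ipDr; field. Qed.
Lemma sipDr x y z : sip z (x + y) = sip z x + sip z y.
Proof. by rewrite /sip ipDl ipDr; field. Qed.
Lemma sipNl x z : sip (- x) z = - sip x z.
Proof. by rewrite /sip ipNl ipNr; field. Qed.
Lemma sipNr x z : sip z (- x) = - sip z x.
Proof. by rewrite /sip ipNl ipNr; field. Qed.
Lemma sipZl a x z : sip (a *: x) z = a * sip x z.
Proof. by rewrite /sip ipZl ipZr; field. Qed.
Lemma sipZr a x z : sip z (a *: x) = a * sip z x.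
Proof. by rewrite /sip ipZl ipZr; field. Qed.
Lemma sipC u v : sip u v = sip v u.
Proof. by rewrite /sip addrC. Qed.
End IP.

Ltac sexp Hip :=
  rewrite ?(ipn Hip) ?(ip_sip Hip);
  repeat progress rewrite ?(sipDl Hip) ?(sipDr Hip) ?(sipNl Hip) ?(sipNr Hip)
          ?(sipZl Hip) ?(sipZr Hip);
  idtac.

Ltac sexpin Hip H :=
  rewrite ?(ipn Hip) ?(ip_sip Hip) in H;
  repeat progress rewrite ?(sipDl Hip) ?(sipDr Hip) ?(sipNl Hip) ?(sipNr Hip)
          ?(sipZl Hip) ?(sipZr Hip) in H.

Ltac expand_ips Hip ip :=
  rewrite ?(ipn Hip);
  repeat match goal with |- context [ip ?u ?v] =>
    let w := fresh "w" in let e := fresh "e" in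
    set w := ip u v; have e : w = ip u v by [];
    clearbody w; sexpin Hip e; rewrite e; clear e w
  end.

Section F.
Context {R : realType} {V : normedModType R} (ip : V -> V -> R).
Hypothesis Hip : inner_product_of ip.
Variables (f : V -> R) (gradf : V -> V).
Hypothesis Hgrad : is_gradient ip f gradf.

Lemma deriv_line (x d : V) (t0 : R) :
  is_derive t0 1 (fun t : R => f (x + t *: d)) (ip (gradf (x + t0 *: d)) d).
Proof.
have [df dd] := Hgrad (x + t0 *: d).
have E : (fun h : R => h^-1 *: (((fun t : R => f (x + t *: d)) \o shift t0) (h *: 1)
             - f (x + t0 *: d))) =
         (fun h : R => h^-1 *: ((f \o shift (x + t0 *: d)) (h *: d) - f (x + t0 *: d))).
  apply/funext => h /=; congr (_ *: (f _ - _)).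
  by rewrite -[h *: 1]/(h * 1) mulr1 scalerDl addrCA.
apply: DeriveDef.
  by rewrite /derivable E; exact: diff_derivable.
by rewrite /derive E -/(derive f _ d) deriveE // dd.
Qed.

Lemma der_sq (K t0 : R) : is_derive t0 1 (fun t : R => K * (t * t)) (K * (2 * t0)).
Proof.
have H := is_deriveZ K (is_deriveM (is_derive_id t0 (1:R)) (is_derive_id t0 (1:R))).
apply: (is_derive_eq H).
by rewrite /= /GRing.scale /= !mulr1; ring.
Qed.

Lemma mvt_q (c : R) (x d : V) : exists s : R, (0 < s < 1) /\
  (f (x + d) - f x + c / 2 * ip d d = ip (gradf (x + s *: d)) d + c * s * ip d d).
Proof.
pose phi := fun t : R => f (x + t *: d) + c / 2 * ip d d * (t * t).
have D (t0 : R) : is_derive t0 1 phi (ip (gradf (x + t0 *: d)) d + c / 2 * ip d d * (2 * t0)).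
  exact: (is_deriveD (deriv_line x d t0) (der_sq _ t0)).
have [s s01 E] := MVT (f := phi) ltr01 (fun t _ => D t)
   (derivable_within_continuous (fun t _ => @ex_derive _ _ _ _ _ _ _ (D t))).
exists s; split; first by move: s01; rewrite in_itv /=.
move: E; rewrite /phi scale1r scale0r addr0 subr0 mulr1 => E.
have -> : c * s * ip d d = c / 2 * ip d d * (2 * s) by field.
lra.
Qed.

Variables (mu L : R).
Hypothesis mu0 : 0 < mu.
Hypothesis muL : mu < L.
Hypothesis Hsc : strongly_convex mu f.
Hypothesis Hls : L_smooth L gradf.

Lemma L0 : 0 < L. Proof. exact: lt_trans mu0 muL. Qed.

Lemma lim_le (a b c : R) : (forall t, 0 < t < 1 -> a <= b + t * c) -> a <= b.
Proof.
move=> H; case: (leP c 0) => hc.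
  have := H (1/2) ltac:(lra); nra.
rewrite leNgt; apply/negP => hab.
pose t := Num.min (1/2) ((a - b) / (2 * c)).
have t0 : 0 < t by rewrite lt_min; apply/andP; split; [lra| apply: divr_gt0; lra].
have t1 : t <= (a - b) / (2 * c) by rewrite ge_min lexx orbT.
have t2 : t <= 1/2 by rewrite ge_min lexx.
have := H t ltac:(lra).
have : t * c <= (a - b) / (2 * c) * c by rewrite ler_pM2r.
have -> : (a - b) / (2 * c) * c = (a - b) / 2 by field; rewrite gt_eqF.
lra.
Qed.

Lemma mono_up u v : ip (gradf u - gradf v) (u - v) <= L * ip (u - v) (u - v).
Proof.
have L0 := L0.
have := youngL Hip L (gradf u - gradf v) (u - v) L0.
have h : ip (gradf u - gradf v) (gradf u - gradf v) <= L * (L * ip (u - v) (u - v)).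
  rewrite -!(ipn Hip) mulrA -expr2 -exprMn ler_sqr ?nnegrE //; last by apply: mulr_ge0 => //; exact: ltW.
have : ip (gradf u - gradf v) (gradf u - gradf v) / L <= L * ip (u - v) (u - v).
  by rewrite ler_pdivrMr // mulrC.
lra.
Qed.

Lemma mono_lo u v : - (L * ip (u - v) (u - v)) <= ip (gradf u - gradf v) (u - v).
Proof.
have L0 := L0.
have := youngL Hip L (- (gradf u - gradf v)) (u - v) L0.
rewrite (ipNl Hip) (ipNl Hip) (ipNr Hip) opprK.
have h : ip (gradf u - gradf v) (gradf u - gradf v) <= L * (L * ip (u - v) (u - v)).
  rewrite -!(ipn Hip) mulrA -expr2 -exprMn ler_sqr ?nnegrE //; last by apply: mulr_ge0 => //; exact: ltW.
have : ip (gradf u - gradf v) (gradf u - gradf v) / L <= L * ip (u - v) (u - v).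
  by rewrite ler_pdivrMr // mulrC.
lra.
Qed.

Lemma LB (c : R) : 0 <= c ->
  (forall u v, - (c * ip (u - v) (u - v)) <= ip (gradf u - gradf v) (u - v)) ->
  forall x y, f x + ip (gradf x) (y - x) - c / 2 * ip (y - x) (y - x) <= f y.
Proof.
move=> c0 H x y; have [s [/andP[s0 s1] E]] := mvt_q c x (y - x).
move: E; have -> : x + (y - x) = y by rewrite addrC subrK.
move=> E.
have := H (x + s *: (y - x)) x.
have -> : x + s *: (y - x) - x = s *: (y - x) by rewrite [x + _]addrC addrK.
rewrite (ipZl Hip) (ipZr Hip) (ipZr Hip) (ipDl Hip) (ipNl Hip) => H'.
nra.
Qed.

Lemma UB (C : R) :
  (forall u v, ip (gradf u - gradf v) (u - v) <= C * ip (u - v) (u - v)) ->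
  forall x y, f y <= f x + ip (gradf x) (y - x) + C / 2 * ip (y - x) (y - x).
Proof.
move=> H x y; have [s [/andP[s0 s1] E]] := mvt_q (- C) x (y - x).
move: E; have -> : x + (y - x) = y by rewrite addrC subrK.
move=> E.
have := H (x + s *: (y - x)) x.
have -> : x + s *: (y - x) - x = s *: (y - x) by rewrite [x + _]addrC addrK.
rewrite (ipZl Hip) (ipZr Hip) (ipZr Hip) (ipDl Hip) (ipNl Hip) => H'.
nra.
Qed.

Lemma SC1 x y : f y + ip (gradf y) (x - y) + mu / 2 * ip (x - y) (x - y) <= f x.
Proof.
have L0 := L0.
apply: (@lim_le _ _ ((mu + L) / 2 * ip (x - y) (x - y))) => t /andP[t0 t1].
have H1 := Hsc x y t ltac:(apply/andP; split; lra).
have H2 := @LB L (ltW L0) mono_lo y (t *: x + (1 - t) *: y).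
rewrite -(ler_pM2l t0).
move: H1 H2; sexp Hip => H1 H2.
Time lra.
Qed.

Lemma IF a b : 0 <= I_f ip mu L f gradf a b.
Proof.
have L0 := L0.
pose w := gradf a - gradf b - mu *: (a - b).
pose z := a - (L - mu)^-1 *: w.
have H1 := SC1 z b.
have H2 := @UB L mono_up a z.
rewrite -subr_ge0 in H1; rewrite -subr_ge0 in H2.
move: H1 H2; move: (f z) => fz; apply: lc2.
  rewrite /I_f /z /w; sexp Hip.
  rewrite ?(@sipC _ _ ip a (gradf a)) ?(@sipC _ _ ip a (gradf b)) ?(@sipC _ _ ip b (gradf a)) ?(@sipC _ _ ip b (gradf b))
          ?(@sipC _ _ ip b a) ?(@sipC _ _ ip (gradf b) (gradf a)).
  by field; rewrite subr_eq0 gt_eqF.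
Qed.




Variable g : V -> \bar R.
Hypothesis Hgc : econvex g.

Lemma prox_sub (c : R) x p w : 0 < c -> is_prox g (1 / c) x p ->
  g p != -oo%E -> g p != +oo%E -> g w != -oo%E -> g w != +oo%E ->
  fine (g p) + ip (c *: (x - p)) (w - p) <= fine (g w).
Proof.
move=> c0 Hp p1 p2 w1 w2.
have ep := efin_of p1 p2; have ew := efin_of w1 w2.
apply: (@lim_le _ _ (c / 2 * ip (w - p) (w - p))) => t /andP[t0 t1].
pose wt := t *: w + (1 - t) *: p.
have H1 := Hgc w p t ltac:(apply/andP; split; lra).
have H2 := Hp wt.
rewrite -/wt ep ew -!EFinM -EFinD in H1.
have H3 : (g p + (`|x - p| ^+ 2 / (2 * (1 / c)))%:E <=
          (t * fine (g w) + (1 - t) * fine (g p))%:E + (`|x - wt| ^+ 2 / (2 * (1 / c)))%:E)%E.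
  exact: le_trans H2 (leeD2r _ H1).
rewrite ep -!EFinD lee_fin in H3.
have e2 : forall v, v / (2 * (1 / c)) = c / 2 * v by move=> v; field; rewrite gt_eqF.
rewrite !e2 in H3.
rewrite -(ler_pM2l t0).
move: H3; rewrite /wt; sexp Hip; rewrite /sip => H3.
lra.
Qed.

Lemma opt_sub xs w : (forall w, ((f xs)%:E + g xs <= (f w)%:E + g w)%E) ->
  g xs != -oo%E -> g xs != +oo%E -> g w != -oo%E -> g w != +oo%E ->
  fine (g xs) + ip (- gradf xs) (w - xs) <= fine (g w).
Proof.
move=> Hopt p1 p2 w1 w2.
have ep := efin_of p1 p2; have ew := efin_of w1 w2.
apply: (@lim_le _ _ (L / 2 * ip (w - xs) (w - xs))) => t /andP[t0 t1].
pose wt := t *: w + (1 - t) *: xs.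
have H1 := Hgc w xs t ltac:(apply/andP; split; lra).
have H2 := Hopt wt.
have H4 := @UB L mono_up xs wt.
rewrite -/wt ep ew -!EFinM -EFinD in H1.
have H3 : ((f xs)%:E + g xs <= (f wt)%:E + (t * fine (g w) + (1 - t) * fine (g xs))%:E)%E.
  exact: le_trans H2 (leeD2l _ H1).
rewrite ep -!EFinD lee_fin in H3.
rewrite -(ler_pM2l t0).
move: H3 H4; rewrite /wt; sexp Hip; rewrite /sip => H3 H4.
lra.
Qed.

End F.

Theorem lemma5 (R : realType) (V : completeNormedModType R)
  (ip : V -> V -> R) (f : V -> R) (gradf : V -> V) (g : V -> \bar R)
  (mu L : R) (xstar : V) (x y z zbar : nat -> V) :
  inner_product_of ip ->
  0 < mu -> mu < L ->
  is_gradient ip f gradf ->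
  strongly_convex mu f ->
  L_smooth L gradf ->
  econvex g -> eproper g -> lower_semicontinuous g ->
  (forall w, ((f xstar)%:E + g xstar <= (f w)%:E + g w)%E) ->
  z 0%N = x 0%N ->
  (forall k,
     let q := mu / L in
     [/\ y k = (2 * Num.sqrt q / (1 + Num.sqrt q)) *: z k
               + ((1 - Num.sqrt q) / (1 + Num.sqrt q)) *: x k,
         zbar k.+1 = (1 - Num.sqrt q) *: z k + Num.sqrt q *: y k
                     - (1 / (Num.sqrt q * L)) *: gradf (y k),
         is_prox g (1 / (Num.sqrt q * L)) (zbar k.+1) (z k.+1)
       & x k.+1 = y k - (1 / L) *: gradf (y k)
                  - Num.sqrt q *: (zbar k.+1 - z k.+1)]) ->
  forall k : nat, (1 <= k)%N ->
    Vinf ip mu L f gradf g xstar y z zbar k.+1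
      <= (1 - Num.sqrt (mu / L)) ^+ 2 * Vinf ip mu L f gradf g xstar y z zbar k.
Proof.
move=> Hip mu0 muL Hgrad Hsc Hls Hgc [gninf [x0 gx0]] _ Hopt _ Hit [//|k] _.
have L0 : 0 < L by lra.
have q0 : 0 < mu / L by apply: divr_gt0.
have q1 : mu / L < 1 by rewrite ltr_pdivrMr // mul1r.
set r := Num.sqrt (mu / L).
have r0 : 0 < r by rewrite sqrtr_gt0.
have r2 : r ^+ 2 = mu / L by rewrite sqr_sqrtr // ltW.
have r1 : r < 1 by rewrite -(sqrtr1 R) ltr_sqrt // ltr01.
have c0 : 0 < r * L by apply: mulr_gt0.
have [_ _ Hp1 ex1] := Hit k.
have [ey1 ezb2 Hp2 _] := Hit k.+1.
rewrite -/r in Hp1 ex1 ey1 ezb2 Hp2.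
have gxs1 := gninf xstar.
have gxs2 : g xstar != +oo%E.
  have := Hopt x0; rewrite (efin_of (gninf x0) gx0) -EFinD; exact: fin_le1.
have gz11 := gninf (z k.+1).
have gz12 : g (z k.+1) != +oo%E.
  have := Hp1 xstar; rewrite (efin_of gxs1 gxs2) -EFinD; exact: fin_le2.
have gz21 := gninf (z k.+2).
have gz22 : g (z k.+2) != +oo%E.
  have := Hp2 xstar; rewrite (efin_of gxs1 gxs2) -EFinD; exact: fin_le2.
have H1 := IF _ Hip _ _ Hgrad _ _ mu0 muL Hsc Hls (y k) (y k.+1).
have H2 := IF _ Hip _ _ Hgrad _ _ mu0 muL Hsc Hls xstar (y k.+1).
have H3 := prox_sub _ Hip _ Hgc (r * L) (zbar k.+2) (z k.+2) xstar c0 Hp2 gz21 gz22 gxs1 gxs2.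
have H4 := prox_sub _ Hip _ Hgc (r * L) (zbar k.+1) (z k.+1) (z k.+2) c0 Hp1 gz11 gz12 gz21 gz22.
have H5 := opt_sub _ Hip _ _ Hgrad _ _ mu0 muL Hls _ Hgc xstar (z k.+2) Hopt gxs1 gxs2 gz21 gz22.
have H6 := ip_ge0 Hip ((r * L) *: (zbar k.+2 - z k.+2) + gradf xstar
             - (1 - r) ^+ 2 *: ((r * L) *: (zbar k.+1 - z k.+1) + gradf xstar)).
have H7 := ip_ge0 Hip ((r * L) *: (zbar k.+1 - z k.+1) + gradf xstar).
rewrite -subr_ge0 in H3; rewrite -subr_ge0 in H4; rewrite -subr_ge0 in H5.
rewrite -subr_ge0.
rewrite /Vinf /= /I_f /I_g in H1 H2 H3 H4 H5 *.
rewrite -/r.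
clearbody r.
have hmu : mu = r ^+ 2 * L by rewrite r2 mulfVK // gt_eqF.
rewrite ezb2 in H3 H6 *.
set F1 := f (y k.+1) in H1 H2 *.
set g1 := gradf (y k.+1) in H1 H2 H3 H6 *.
clearbody F1 g1.
rewrite ey1 ex1 in H1 H2 H3 H6 *.
set F0 := f (y k) in H1 *.
set g0 := gradf (y k) in H1 H2 H3 H6 *.
set gs := gradf xstar in H2 H5 H6 H7 *.
set Fs := f xstar in H2 *.
set Gs := fine (g xstar) in H3 H5 *.
set G1 := fine (g (z k.+1)) in H4 *.
set G2 := fine (g (z k.+2)) in H3 H4 H5 *.
clearbody F0 g0 gs Fs Gs G1 G2.
move: (y k) (z k.+1) (z k.+2) (zbar k.+1) H1 H2 H3 H4 H5 H6 H7 => Y0 Z1 Z2 Zb1 H1 H2 H3 H4 H5 H6 H7.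
rewrite hmu in H1 H2 *.
move: H1 H2 H3 H4 H5 H6 H7.
expand_ips Hip ip.
move=> H1 H2 H3 H4 H5 H6 H7.
rewrite ?(@sipC _ _ ip gs xstar) ?(@sipC _ _ ip Y0 xstar) ?(@sipC _ _ ip g0 xstar) ?(@sipC _ _ ip Z1 xstar) ?(@sipC _ _ ip Zb1 xstar) ?(@sipC _ _ ip g1 xstar) ?(@sipC _ _ ip Z2 xstar) ?(@sipC _ _ ip Y0 gs) ?(@sipC _ _ ip g0 gs) ?(@sipC _ _ ip Z1 gs) ?(@sipC _ _ ip Zb1 gs) ?(@sipC _ _ ip g1 gs) ?(@sipC _ _ ip Z2 gs) ?(@sipC _ _ ip g0 Y0) ?(@sipC _ _ ip Z1 Y0) ?(@sipC _ _ ip Zb1 Y0) ?(@sipC _ _ ip g1 Y0) ?(@sipC _ _ ip Z2 Y0) ?(@sipC _ _ ip Z1 g0) ?(@sipC _ _ ip Zb1 g0) ?(@sipC _ _ ip g1 g0) ?(@sipC _ _ ip Z2 g0) ?(@sipC _ _ ip Zb1 Z1) ?(@sipC _ _ ip g1 Z1) ?(@sipC _ _ ip Z2 Z1) ?(@sipC _ _ ip g1 Zb1) ?(@sipC _ _ ip Z2 Zb1) ?(@sipC _ _ ip Z2 g1) in H1 H2 H3 H4 H5 H6 H7 *.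
apply: (@lc7 _ ((1 - r) ^+ 2 * (1 - r ^+ 2)) ((1 - r ^+ 2) * (1 - (1 - r) ^+ 2))
  (1 - (1 - r) ^+ 2) ((1 - r) ^+ 2 * r) ((1 + r) * (1 - (1 - r) ^+ 2))
  (1 / (2 * L)) ((1 - r) ^+ 2 * (1 - (1 - r) ^+ 2) / (2 * L))
  _ _ _ _ _ _ _ _ _ _ _ _ _ _ _ H1 H2 H3 H4 H5 H6 H7).
- by clear -r0 r1; apply: mulr_ge0; [exact: sqr_ge0 | nra].
- by clear -r0 r1; apply: mulr_ge0; nra.
- clear -r0 r1; nra.
- by clear -r0 r1; apply: mulr_ge0; [exact: sqr_ge0 | exact: ltW].
- by clear -r0 r1; apply: mulr_ge0; nra.
- by clear -L0; rewrite divr_ge0 // ltW // mulr_gt0.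
- clear -r0 r1 L0; apply: divr_ge0; last by apply: mulr_ge0 => //; exact: ltW.
  by apply: mulr_ge0; [exact: sqr_ge0 | nra].
field.
clear -r0 r1 L0.
have h1 : 0 < L - r ^+ 2 * L.
  have h : 0 < 1 - r ^+ 2 by nra.
  by have := mulr_gt0 h L0; rewrite mulrBl mul1r.
by apply/and4P; split; apply/negbT/gt_eqF => //; lra.
Qed.
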